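(* Let $G=(V,E)$ be a finite graph. (a) Eulerian equivalence $\sim$ is an equivalence relation on the set $\mathcal O(G)$ of orientations. (b) If $\rho,\sigma\in\mathcal O(G)$ are Eulerian equivalent and $\rho$ is totally cyclic, then so is $\sigma$. (c) Let $q$ be a positive integer and $\rho,\sigma\in\mathcal O(G)$ with $\rho\sim\sigma$. Then $Q_{\rho,\sigma}$ restricts to a bijection $q\bar\Delta^+_{\mathrm{FL}}(G,\sigma)\to q\bar\Delta^+_{\mathrm{FL}}(G,\rho)$ sending lattice points to lattice points; in particular $Q_{\rho,\sigma}(q\Delta^+_{\mathrm{FL}}(G,\sigma))=q\Delta^+_{\mathrm{FL}}(G,\rho)$, $\varphi_\rho(G,q)=\varphi_\sigma(G,q)$ and $\bar\varphi_\rho(G,q)=\bar\varphi_\sigma(G,q)$.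
   Context: An orientation assigns each edge (including loops) one of its two directions; $\varepsilon(v,e)=1$ ($-1$) if non-loop $e$ points out of (into) end-vertex $v$, $0$ otherwise. Real flows $F(G,\varepsilon;\mathbb R)$: $f:E\to\mathbb R$ with $\sum_e m_{v,e}f(e)=0$ for all $v$, $m_{v,e}=\varepsilon(v,e)$ for non-loops, $0$ for loops; integer flows $F(G,\varepsilon;\mathbb Z)$ similarly. A digraph is directed Eulerian if in-degree equals out-degree at each vertex (a loop contributing one of each). $\rho\sim\sigma$ (Eulerian equivalent) if the spanning subgraph whose edges are those on which $\rho,\sigma$ differ is directed Eulerian with respect to $\rho$ (equivalently $\sigma$). A cut $[S,S^c]$ (nonempty set of all edges between a nonempty proper vertex set $S$ and its complement) is directed if all its edges point from $S$ to $S^c$ or all from $S^c$ to $S$; an orientation is totally cyclic if it has no directed cut. $Q_{\rho,\sigma}:[0,q]^E\to[0,q]^E$ is $(Q_{\rho,\sigma}g)(e)=g(e)$ if $\rho,\sigma$ give $e$ the same direction and $q-g(e)$ otherwise. $q\Delta^+_{\mathrm{FL}}(G,\rho)=\{f\in F(G,\rho;\mathbb R):0<f(e)<q\ \forall e\}$, $q\bar\Delta^+_{\mathrm{FL}}(G,\rho)=\{f\in F(G,\rho;\mathbb R):0\le f(e)\le q\ \forall e\}$; lattice points are those in $\mathbb Z^E$. $\varphi_\rho(G,q)=\#\{f\in F(G,\rho;\mathbb Z):0<f(e)<q\ \forall e\}$, $\bar\varphi_\rho(G,q)=\#\{f\in F(G,\rho;\mathbb Z):0\le f(e)\le q\ \forall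 e\}$. *)

(* Defs.v *)
From HB Require Import structures.
From mathcomp Require Import all_boot all_order all_algebra.
From mathcomp Require Import reals.
Set Implicit Arguments. Unset Strict Implicit. Unset Printing Implicit Defensive.
Import Order.TTheory GRing.Theory Num.Theory.
Local Open Scope ring_scope.

(* An orientation is rho : E -> bool; rho e = true means e is directed from
   (ends e).1 to (ends e).2, rho e = false means from (ends e).2 to (ends e).1. *)

Section Graph.
Variables (V E : finType) (ends : E -> V * V).

Definition is_loop (e : E) : bool := (ends e).1 == (ends e).2.

Definition tail (rho : E -> bool) (e : E) : V :=
  if rho e then (ends e).1 else (ends e).2.
Definition head (rho : E -> bool) (e : E) : V :=
  if rho e then (ends e).2 else (ends e).1.

Definition eps (rho : E -> bool) (v : V) (e : E) : int :=
  if is_loop e then 0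
  else if tail rho e == v then 1
  else if head rho e == v then -1 else 0.

Definition is_flow (R : pzRingType) (rho : E -> bool) (f : E -> R) : bool :=
  [forall v : V, \sum_(e : E) (eps rho v e)%:~R * f e == 0].

(* the spanning subgraph with edge set D, oriented by rho, is directed
   Eulerian: indegree = outdegree at every vertex (a loop counts once each) *)
Definition directed_eulerian (rho : E -> bool) (D : {set E}) : Prop :=
  forall v : V, #|[set e in D | tail rho e == v]| = #|[set e in D | head rho e == v]|.

Definition diff_set (rho sigma : E -> bool) : {set E} :=
  [set e | rho e != sigma e].

Definition euler_equiv (rho sigma : E -> bool) : Prop :=
  directed_eulerian rho (diff_set rho sigma).

Definition cut_edges (S : {set V}) : {set E} :=
  [set e | ((ends e).1 \in S) != ((ends e).2 \in S)].

Definition is_cut (S : {set V}) : Prop :=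
  S != set0 /\ S != [set: V] /\ cut_edges S != set0.

Definition directed_cut (rho : E -> bool) (S : {set V}) : Prop :=
  is_cut S /\
  ((forall e, e \in cut_edges S -> tail rho e \in S) \/
   (forall e, e \in cut_edges S -> head rho e \in S)).

Definition totally_cyclic (rho : E -> bool) : Prop :=
  ~ exists S : {set V}, directed_cut rho S.

Definition Qmap (R : pzRingType) (q : nat) (rho sigma : E -> bool) (g : E -> R)
  : E -> R :=
  fun e => if rho e == sigma e then g e else q%:R - g e.

Definition flow_open (R : realType) (q : nat) (rho : E -> bool) (f : E -> R) : Prop :=
  is_flow rho f /\ forall e, 0 < f e < q%:R.
Definition flow_closed (R : realType) (q : nat) (rho : E -> bool) (f : E -> R) : Prop :=
  is_flow rho f /\ forall e, 0 <= f e <= q%:R.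

Definition lattice_point (R : realType) (f : E -> R) : Prop :=
  forall e, f e \is a Num.int.

(* phi_rho(G,q) and bar phi_rho(G,q): integer flows with values in (0,q),
   resp. [0,q]; these are enumerated as functions E -> {0,...,q}. *)
Definition phi (rho : E -> bool) (q : nat) : nat :=
  #|[set f : {ffun E -> 'I_q.+1} |
      is_flow rho (fun e => ((f e : nat)%:Z)) && [forall e, (0 < f e < q)%N]]|.
Definition phibar (rho : E -> bool) (q : nat) : nat :=
  #|[set f : {ffun E -> 'I_q.+1} | is_flow rho (fun e => ((f e : nat)%:Z))]|.

End Graph.

(* Main.v *)
Require Import Defs.
From HB Require Import structures.
From mathcomp Require Import all_boot all_order all_algebra.
From mathcomp Require Import reals.
From mathcomp Require Import ring lra zify.
From Stdlib Require Import FunctionalExtensionality.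
Import Order.TTheory GRing.Theory Num.Theory.
Local Open Scope ring_scope.

Section L.
Variables (V E : finType) (ends : E -> V * V).

Definition epsT (v : V) (e : E) : int :=
  ((((ends e).1 == v) : nat)%:Z - (((ends e).2 == v) : nat)%:Z).

Lemma epsE rho v e : eps ends rho v e =
  (((tail ends rho e == v) : nat)%:Z - ((Defs.head ends rho e == v) : nat)%:Z).
Proof.
rewrite /eps /is_loop /tail /Defs.head; case: (ends e) => a b /=.
case: (eqVneq a b) => [->|ab]; first by case: (rho e) => /=; rewrite ?subrr.
case: (rho e).
- case: (eqVneq a v) => [av|av] //; case: (eqVneq b v) => [bv|bv] //.
  by move: ab; rewrite av bv eqxx.
- case: (eqVneq b v) => [bv|bv] //; case: (eqVneq a v) => [av|av] //.
  by move: ab; rewrite av bv eqxx.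
Qed.

Lemma eps_sign rho v e : eps ends rho v e = (if rho e then 1 else -1) * epsT v e.
Proof. by rewrite epsE /epsT /tail /Defs.head; case: (rho e); rewrite ?mul1r ?mulN1r ?opprB. Qed.

Definition Dsum (rho sigma : E -> bool) (v : V) : int :=
  \sum_(e | rho e != sigma e) eps ends rho v e.

Lemma card_sum (D : {set E}) (P : pred E) :
  #|[set e in D | P e]| = (\sum_(e in D) ((P e) : nat))%N.
Proof.
rewrite -sum1_card big_mkcond [RHS]big_mkcond /=; apply: eq_bigr => e _.
by rewrite !inE; case: (e \in D); case: (P e).
Qed.

Lemma eulerE rho sigma : euler_equiv ends rho sigma <-> forall v, Dsum rho sigma v = 0.
Proof.
rewrite /euler_equiv /directed_eulerian /Dsum.
have H v : \sum_(e | rho e != sigma e) eps ends rho v e =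
  (#|[set e in diff_set rho sigma | tail ends rho e == v]|)%:Z -
  (#|[set e in diff_set rho sigma | Defs.head ends rho e == v]|)%:Z.
  rewrite !card_sum !(big_morph Posz PoszD (erefl 0%:Z)) -sumrB.
  apply: eq_big => e; first by rewrite inE.
  by rewrite epsE.
split=> Hv v; first by rewrite H Hv subrr.
by have := H v; rewrite Hv => /eqP; rewrite eq_sym subr_eq0 => /eqP [].
Qed.

Lemma Dsum_refl rho v : Dsum rho rho v = 0.
Proof. by rewrite /Dsum big_pred0 // => e; rewrite eqxx. Qed.

Lemma Dsum_sym rho sigma v : Dsum sigma rho v = - Dsum rho sigma v.
Proof.
rewrite /Dsum big_mkcond [X in - X]big_mkcond -sumrN /=; apply: eq_bigr => e _.
by rewrite !eps_sign; case: (rho e); case: (sigma e) => /=; ring.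
Qed.

Lemma Dsum_trans rho sigma tau v : Dsum rho tau v = Dsum rho sigma v + Dsum sigma tau v.
Proof.
rewrite /Dsum big_mkcond [X in X + _]big_mkcond [X in _ + X]big_mkcond -big_split /=.
apply: eq_bigr => e _.
by rewrite !eps_sign; case: (rho e); case: (sigma e); case: (tau e) => /=; ring.
Qed.

Lemma partA : [/\ (forall rho : E -> bool, euler_equiv ends rho rho),
      (forall rho sigma : E -> bool,
          euler_equiv ends rho sigma -> euler_equiv ends sigma rho)
    & (forall rho sigma tau : E -> bool,
          euler_equiv ends rho sigma -> euler_equiv ends sigma tau ->
          euler_equiv ends rho tau)].
Proof.
split.
- by move=> rho; apply/eulerE => v; apply: Dsum_refl.
- by move=> rho sigma /eulerE H; apply/eulerE => v; rewrite Dsum_sym H oppr0.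
- move=> rho sigma tau /eulerE H1 /eulerE H2; apply/eulerE => v.
  by rewrite (Dsum_trans _ sigma) H1 H2 addr0.
Qed.

Lemma sum_ind (x : V) (S : {set V}) :
  \sum_(v in S) ((x == v) : nat)%:Z = ((x \in S) : nat)%:Z.
Proof.
rewrite big_mkcond (eq_bigr (fun v => if v == x then ((x \in S) : nat)%:Z else 0)).
  by rewrite -big_mkcond big_pred1_eq.
move=> v _; case: (eqVneq v x) => [->|ne]; first by case: (x \in S).
by case: (v \in S).
Qed.

Lemma sumS rho (S : {set V}) e : \sum_(v in S) eps ends rho v e =
  ((tail ends rho e \in S) : nat)%:Z - ((Defs.head ends rho e \in S) : nat)%:Z.
Proof.
rewrite (eq_bigr _ (fun v _ => epsE rho v e)) sumrB.
by rewrite !sum_ind.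
Qed.

Lemma cutE r (S : {set V}) e : (e \in cut_edges ends S) =
  ((tail ends r e \in S) != (Defs.head ends r e \in S)).
Proof. by rewrite inE /tail /Defs.head; case: (r e) => //; case: ((ends e).1 \in S); case: ((ends e).2 \in S). Qed.

Lemma flipTH rho sigma e : rho e != sigma e ->
  tail ends rho e = Defs.head ends sigma e /\ Defs.head ends rho e = tail ends sigma e.
Proof. by rewrite /tail /Defs.head; case: (rho e); case: (sigma e). Qed.

Lemma partB rho sigma : euler_equiv ends rho sigma -> totally_cyclic ends rho ->
      totally_cyclic ends sigma.
Proof.
move=> /eulerE H Htc [S [Hcut Hdir]]; apply: Htc; exists S; split => //.
set x := fun e => ((tail ends sigma e \in S) : nat)%:Z.
set y := fun e => ((Defs.head ends sigma e \in S) : nat)%:Z.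
have Hs : \sum_(e | rho e != sigma e) (y e - x e) = 0.
  transitivity (\sum_(v in S) Dsum rho sigma v); last first.
    by rewrite big1 // => v _; rewrite H.
  rewrite /Dsum exchange_big; apply: congr_big => // e He.
  by rewrite sumS; case: (flipTH _ _ _ He) => -> ->.
have same : (forall e, rho e != sigma e -> e \in cut_edges ends S -> False) ->
    forall e, e \in cut_edges ends S -> rho e = sigma e.
  move=> K e He; apply/eqP; apply/negP => /negP Hn; exact: K _ Hn He.
case: Hdir => Hd; [left|right] => e He.
- have Hs2 : \sum_(e | rho e != sigma e) (x e - y e) = 0.
    by rewrite -[LHS]opprK -sumrN (eq_bigr (fun e => y e - x e)) ?Hs ?oppr0 // => e' _; rewrite opprB.
  have Hnn : forall e', rho e' != sigma e' -> 0 <= x e' - y e'.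
    move=> e' _; rewrite /x /y.
    case Ht: (tail ends sigma e' \in S); case Hh: (Defs.head ends sigma e' \in S) => //.
    by have := Hd e'; rewrite (cutE sigma) Ht Hh => /(_ isT).
  have P0 := psumr_eq0P Hnn Hs2.
  rewrite /tail (same _ e He); first exact: Hd e He.
  move=> e' Hn Hc; have := Hd _ Hc; move: Hc; rewrite (cutE sigma).
  have := P0 _ Hn.
  rewrite /x /y; case: (tail ends sigma e' \in S); case: (Defs.head ends sigma e' \in S) => //.
- have Hnn : forall e', rho e' != sigma e' -> 0 <= y e' - x e'.
    move=> e' _; rewrite /x /y.
    case Ht: (tail ends sigma e' \in S); case Hh: (Defs.head ends sigma e' \in S) => //.
    by have := Hd e'; rewrite (cutE sigma) Ht Hh => /(_ isT).
  have P0 := psumr_eq0P Hnn Hs.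
  rewrite /Defs.head (same _ e He); first exact: Hd e He.
  move=> e' Hn Hc; have := Hd _ Hc; move: Hc; rewrite (cutE sigma).
  have := P0 _ Hn.
  rewrite /x /y; case: (tail ends sigma e' \in S); case: (Defs.head ends sigma e' \in S) => //.
Qed.

Lemma flowQ (R : comPzRingType) q rho sigma (f : E -> R) :
  euler_equiv ends rho sigma -> is_flow ends sigma f ->
  is_flow ends rho (Qmap q rho sigma f).
Proof.
move=> /eulerE H /forallP Hf; apply/forallP => v.
have -> : \sum_e (eps ends rho v e)%:~R * Qmap q rho sigma f e =
   \sum_e (eps ends sigma v e)%:~R * f e + (Dsum rho sigma v)%:~R * q%:R.
  rewrite /Dsum (big_morph (fun z : int => z%:~R : R) (@intrD R) (mulr0z 1)).
  rewrite mulr_suml [X in _ + X]big_mkcond -big_split; apply: eq_bigr => e _ /=.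
  rewrite /Qmap !eps_sign.
  by case: (rho e); case: (sigma e) => /=; rewrite ?mul1r ?mulN1r ?intrN ?mul0r; ring.
by rewrite H mulr0z mul0r addr0 (eqP (Hf v)).
Qed.

Lemma QQ (R : pzRingType) q rho sigma (g : E -> R) :
  Qmap q rho sigma (Qmap q rho sigma g) = g.
Proof.
apply: functional_extensionality => e; rewrite /Qmap.
by case: eqP => // _; rewrite opprB addrC subrK.
Qed.

Lemma Qsym (R : pzRingType) q rho sigma : @Qmap E R q rho sigma = Qmap q sigma rho.
Proof.
apply: functional_extensionality => g; apply: functional_extensionality => e.
by rewrite /Qmap eq_sym.
Qed.

Lemma Qbnd (R : realType) q rho sigma (f : E -> R) e :
  0 <= f e <= q%:R -> 0 <= Qmap q rho sigma f e <= q%:R.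
Proof.
rewrite /Qmap; case: eqP => // _ /andP[a b]; apply/andP; split; lra.
Qed.

Lemma Qbnd_open (R : realType) q rho sigma (f : E -> R) e :
  0 < f e < q%:R -> 0 < Qmap q rho sigma f e < q%:R.
Proof.
rewrite /Qmap; case: eqP => // _ /andP[a b]; apply/andP; split; lra.
Qed.

Definition Fm q (rho sigma : E -> bool) (f : {ffun E -> 'I_q.+1}) : {ffun E -> 'I_q.+1} :=
  [ffun e => if rho e == sigma e then f e else rev_ord (f e)].

Lemma FmK q rho sigma : cancel (Fm q rho sigma) (Fm q rho sigma).
Proof.
move=> f; apply/ffunP => e; rewrite !ffunE.
by case: eqP => // _; rewrite rev_ordK.
Qed.

Lemma Fm_sym q rho sigma f : Fm q rho sigma f = Fm q sigma rho f.
Proof. by apply/ffunP => e; rewrite !ffunE eq_sym. Qed.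

Lemma Fm_cast q rho sigma f :
  (fun e => ((Fm q rho sigma f e : nat)%:Z)) = Qmap q rho sigma (fun e => ((f e : nat)%:Z)).
Proof.
apply: functional_extensionality => e; rewrite /Qmap ffunE.
case: eqP => // _ /=; rewrite subSS natz subzn //.
by rewrite -ltnS.
Qed.

Lemma Fm_bnd q rho sigma (f : {ffun E -> 'I_q.+1}) :
  [forall e, (0 < f e < q)%N] -> [forall e, (0 < Fm q rho sigma f e < q)%N].
Proof.
move=> /forallP H; apply/forallP => e; have := H e; rewrite ffunE.
case: eqP => //= _; rewrite subSS; have := ltn_ord (f e); lia.
Qed.

Lemma card_inv (T : finType) (F : T -> T) (A B : pred T) : cancel F F ->
  (forall x, B x -> A (F x)) -> (forall x, A x -> B (F x)) ->
  #|[set x | A x]| = #|[set x | B x]|.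
Proof.
move=> K HBA HAB; rewrite -[RHS](card_imset _ (can_inj K)); apply: eq_card => x.
rewrite inE; apply/idP/imsetP.
- by move=> Ax; exists (F x); rewrite ?inE ?K //; apply: HAB.
- by case=> y; rewrite inE => By ->; apply: HBA.
Qed.
End L.

Theorem lemma5p1 (V E : finType) (ends : E -> V * V) (R : realType) :
  (* (a) Eulerian equivalence is an equivalence relation *)
  [/\ (forall rho : E -> bool, euler_equiv ends rho rho),
      (forall rho sigma : E -> bool,
          euler_equiv ends rho sigma -> euler_equiv ends sigma rho)
    & (forall rho sigma tau : E -> bool,
          euler_equiv ends rho sigma -> euler_equiv ends sigma tau ->
          euler_equiv ends rho tau)] /\
  (* (b) *)
  (forall rho sigma : E -> bool,
      euler_equiv ends rho sigma -> totally_cyclic ends rho ->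
      totally_cyclic ends sigma) /\
  (* (c) *)
  (forall (q : nat) (rho sigma : E -> bool), (0 < q)%N ->
      euler_equiv ends rho sigma ->
      [/\ (forall f : E -> R, flow_closed ends q sigma f ->
              flow_closed ends q rho (Qmap q rho sigma f)),
          (forall g : E -> R, flow_closed ends q rho g ->
              exists! (f : E -> R), flow_closed ends q sigma f /\ Qmap q rho sigma f = g),
          (forall f : E -> R, flow_closed ends q sigma f -> lattice_point f ->
              lattice_point (Qmap q rho sigma f)),
          (forall g : E -> R, flow_open ends q rho g <->
              exists f : E -> R, flow_open ends q sigma f /\ Qmap q rho sigma f = g)
        & phi ends rho q = phi ends sigma q /\
          phibar ends rho q = phibar ends sigma q]).

Proof.
split; first exact: partA. split; first exact: partB.
move=> q rho sigma q0 Heq.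
have [_ Hsym _] := partA V E ends. have Heq' := Hsym _ _ Heq.
split.
- move=> f [Hf Hb]; split; [exact: flowQ | by move=> e; apply: Qbnd].
- move=> g [Hg Hb]; exists (Qmap q rho sigma g); split.
  + split; last by rewrite QQ.
    split; [rewrite Qsym; exact: flowQ | by move=> e; apply: Qbnd].
  + by move=> f' [_ <-]; rewrite QQ.
- move=> f _ Hl e; rewrite /Qmap; case: eqP => // _.
  by apply: rpredB => //; exact: natr_int.
- move=> g; split.
  + move=> [Hg Hb]; exists (Qmap q rho sigma g); split; last by rewrite QQ.
    split; [rewrite Qsym; exact: flowQ | by move=> e; apply: Qbnd_open].
  + move=> [f [[Hf Hb] <-]]; split; [exact: flowQ | by move=> e; apply: Qbnd_open].
- split.
  + rewrite /phi. apply: (@card_inv {ffun E -> 'I_q.+1} (Fm E q rho sigma) (fun f => is_flow ends rho (fun e => ((f e : nat)%:Z)) && [forall e, (0 < f e < q)%N]) (fun f => is_flow ends sigma (fun e => ((f e : nat)%:Z)) && [forall e, (0 < f e < q)%N]) (@FmK E q rho sigma)) => f /andP[Hf Hb]; apply/andP; split.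
    * by rewrite Fm_cast; exact: flowQ.
    * exact: Fm_bnd.
    * by rewrite Fm_sym Fm_cast; exact: flowQ.
    * by rewrite Fm_sym; exact: Fm_bnd.
  + rewrite /phibar; apply: (@card_inv {ffun E -> 'I_q.+1} (Fm E q rho sigma) (fun f => is_flow ends rho (fun e => ((f e : nat)%:Z))) (fun f => is_flow ends sigma (fun e => ((f e : nat)%:Z))) (@FmK E q rho sigma)) => f Hf.
    * by rewrite Fm_cast; exact: flowQ.
    * by rewrite Fm_sym Fm_cast; exact: flowQ.
Qed.
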